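(* Let $n\ge 3$ be a prime power and let $x,y,z$ be the coordinate functions of the GK curve over $\mathbb{F}_{n^6}$. For $1\le k\le n^2-1$ define sets of rational functions $T_k$ as follows. For $1\le k\le n-1$: $T_k=\{y^iz^j/x^k : 0\le i\le k,\ k-i+1\le j\le n^2-n\}\cup\{y^iz^j/x^k : k+1\le i\le n,\ 0\le j\le n^2-n\}$. For $n\le k\le n^2-n-2$: $T_k=\{y^iz^j/x^k : 0\le i\le n,\ k-i+1\le j\le n^2-n\}$. For $n^2-n-1\le k\le n^2-1$: $T_k=\{y^iz^j/x^k : k-n^2+n+1\le i\le n,\ k-i+1\le j\le n^2-n\}$. Let $T=\bigcup_{k=1}^{n^2-1}T_k$. Then the functions listed are pairwise distinct and $|T|=g=\tfrac12(n^5-2n^3+n^2)$, the genus of the GK curve.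
   Context: Let $n\ge 2$ be a prime power and $q=n^3$. The GK curve is the (absolutely irreducible, nonsingular) curve in $\mathbb{P}^3$ over $\mathbb{F}_{q^2}$ with affine equations $Z^{n^2-n+1}=Y\,h(X)$, $X^n+X=Y^{n+1}$, where $h(X)=\sum_{i=0}^{n}(-1)^{i+1}X^{i(n-1)}$. Its function field is $\mathbb{F}_{q^2}(x,y,z)$ with $z^{n^2-n+1}=y h(x)$ and $x^n+x=y^{n+1}$. It has a unique point at infinity $P_\infty=(1:0:0:0)$, and $P_0$ denotes the affine point $(0,0,0)$. Its genus is $g=\tfrac12(n^3+1)(n^2-2)+1=\tfrac12(n^5-2n^3+n^2)$. *)

(* Defs.v *)
From HB Require Import structures.
From mathcomp Require Import all_boot all_order all_algebra all_field.
Set Implicit Arguments. Unset Strict Implicit. Unset Printing Implicit Defensive.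
Import GRing.Theory.
Local Open Scope ring_scope.

Definition prime_power (n : nat) : Prop :=
  exists p e : nat, prime p /\ n = (p ^ e.+1)%N.

Definition gk_h (R : pzRingType) (n : nat) (x : R) : R :=
  \sum_(i < n.+1) (-1) ^+ i.+1 * x ^+ (i * (n - 1)).

(* Membership of the exponent triple (i,j,k) (function y^i z^j / x^k) in T_k,
   for 1 <= k <= n^2 - 1.  Truncated subtractions are avoided by writing the
   lower bounds additively:  k-i+1 <= j  as  k+1 <= j+i,  and
   k-n^2+n+1 <= i  as  k+n+1 <= i+n^2. *)
Definition inT (n i j k : nat) : bool :=
  [&& (1 <= k)%N, (k <= n ^ 2 - 1)%N &
   if (k <= n - 1)%N then
     ((i <= k) && (k + 1 <= j + i) && (j <= n ^ 2 - n))%N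
     || ((k + 1 <= i) && (i <= n) && (j <= n ^ 2 - n))%N
   else if (k <= n ^ 2 - n - 2)%N then
     ((i <= n) && (k + 1 <= j + i) && (j <= n ^ 2 - n))%N
   else
     ((k + n + 1 <= i + n ^ 2) && (i <= n) && (k + 1 <= j + i)
      && (j <= n ^ 2 - n))%N].

(* Exponent triples ((i, j), k); the bounds i <= n, j <= n^2-n, k <= n^2-1
   are implied by inT, so the finite index type loses nothing. *)
Definition Tidx (n : nat) : {set 'I_n.+1 * 'I_(n ^ 2 - n).+1 * 'I_(n ^ 2)} :=
  [set t : 'I_n.+1 * 'I_(n ^ 2 - n).+1 * 'I_(n ^ 2) | inT n t.1.1 t.1.2 t.2].

Definition gk_fun (L : fieldType) (x y z : L) (n : nat)
  (t : 'I_n.+1 * 'I_(n ^ 2 - n).+1 * 'I_(n ^ 2)) : L :=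
  y ^+ t.1.1 * z ^+ t.1.2 / x ^+ t.2.

Definition gk_T (L : fieldType) (x y z : L) (n : nat) : seq L :=
  undup [seq gk_fun x y z t | t <- enum (Tidx n)].

Definition gk_genus (n : nat) : nat := ((n ^ 5 + n ^ 2 - 2 * n ^ 3) %/ 2)%N.

(* Main.v *)
Require Import Defs.
From HB Require Import structures.
From mathcomp Require Import all_boot all_order all_algebra all_field.
From mathcomp Require Import zify ring.
Import GRing.Theory.
Lemma inT_equiv n i j k : (3 <= n)%N ->
  inT n i j k = [&& 1 <= k, k <= n ^ 2 - 1, k + n + 1 <= i + n ^ 2, i <= n,
                  k + 1 <= j + i & j <= n ^ 2 - n].
Proof.
move=> n3; rewrite /inT.
have : (n <= n ^ 2)%N by rewrite expnS leq_pmulr // expn1; lia.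
set N := n ^ 2 => nN.
have nN2 : (2 * n <= N)%N by rewrite /N expnS expn1 leq_mul2r; lia.
case: ifP => h1; last case: ifP => h2; apply/idP/idP; lia.
Qed.

Lemma cntk M s : \sum_(k < M) ((1 <= k) && (k + 1 <= s)) = minn M s - 1.
Proof.
elim: M => [|M IH]; first by rewrite big_ord0 ?min0n.
rewrite big_ord_recr /= IH.
case: (leqP 1 M) => h1; case: (leqP (M+1) s) => h2 /=; lia.
Qed.

Lemma S1 c b : 2 * \sum_(j < b) (c + j) + b = b * (2 * c + b).
Proof.
elim: b => [|b IH]; first by rewrite big_ord0 ?min0n.
rewrite big_ord_recr /=.
move: IH; move: (\sum_(j < b) _) => S IH.
nia.
Qed.

Lemma S0 b : 2 * \sum_(j < b.+1) (j - 1) + b = b * b.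
Proof.
rewrite big_ord_recl /= sub0n add0n.
have -> : \sum_(i < b) (bump 0 i - 1) = \sum_(i < b) (0 + i).
  by apply: eq_bigr => i _; rewrite /bump /=; lia.
by rewrite S1.
Qed.

Lemma SU a b : 2 * \sum_(i < a) \sum_(j < b) (i + j) + 2 * a * b = a * b * (a + b).
Proof.
elim: a => [|a IH]; first by rewrite big_ord0 ?min0n.
rewrite big_ord_recr /=; have := S1 a b.
move: IH; move: (\sum_(j < b) (a + j)) (\sum_(i < a) _) => S T IH H.
nia.
Qed.

Lemma Tot a b : 2 * \sum_(i < a.+1) \sum_(j < b.+1) (i + j - 1) + b + 2 * a * b.+1 = b * b + a * b.+1 * (a + b.+1).
Proof.
rewrite big_ord_recl /=.
have -> : \sum_(i < a) \sum_(j < b.+1) (bump 0 i + j - 1) = \sum_(i < a) \sum_(j < b.+1) (i + j).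
  by apply: eq_bigr => i _; apply: eq_bigr => j _; rewrite /bump /=; lia.
have := S0 b; have := SU a b.+1.
have -> : \sum_(j < b.+1) (0 + j - 1) = \sum_(j < b.+1) (j - 1) by [].
lia.
Qed.

Lemma cardT n : (3 <= n)%N -> (2 * #|Tidx n| = n ^ 5 + n ^ 2 - 2 * n ^ 3)%N.
Proof.
move=> n3.
have -> : #|Tidx n| = \sum_(i < n.+1) \sum_(j < (n ^ 2 - n).+1) (i + j - 1).
  rewrite -sum1_card big_mkcond /=.
  have -> : \sum_(t : 'I_n.+1 * 'I_(n ^ 2 - n).+1 * 'I_(n ^ 2)) (if t \in Tidx n then 1 else 0)
     = \sum_(i < n.+1) \sum_(j < (n ^ 2 - n).+1) \sum_(k < n ^ 2) (if ((i, j), k) \in Tidx n then 1 else 0).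
    by rewrite pair_bigA pair_bigA; apply: eq_bigr => [[[i j] k]].
  apply: eq_bigr => i _; apply: eq_bigr => j _.
  rewrite (eq_bigr (fun k : 'I_(n^2) => ((1 <= k) && (k + 1 <= j + i))%N : nat)).
    rewrite cntk.
    have hi := ltn_ord i; have hj := ltn_ord j.
    have : (n <= n ^ 2)%N by rewrite expnS leq_pmulr // expn1; lia.
    lia.
  move=> k _; rewrite inE /= inT_equiv //.
  have hi := ltn_ord i; have hj := ltn_ord j; have hk := ltn_ord k.
  have : (2 * n <= n ^ 2)%N by rewrite expnS expn1 leq_mul2r; lia.
  move=> h2.
  have -> : [&& 0 < k, k <= n ^ 2 - 1, k + n + 1 <= i + n ^ 2, i <= n, k + 1 <= j + i
      & j <= n ^ 2 - n] = (0 < k) && (k + 1 <= j + i) by apply/idP/idP; lia.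
  by case: (_ && _).
have := Tot n (n ^ 2 - n).
have : (n <= n ^ 2)%N by rewrite expnS leq_pmulr // expn1; lia.
have e2 : (n ^ 2 = n * n)%N by rewrite expnS expn1.
have e3 : (n ^ 3 = n * n * n)%N by rewrite !expnS expn0; lia.
have e5 : (n ^ 5 = n * n * n * n * n)%N by rewrite !expnS expn0; lia.
rewrite e2 e3 e5.
set s := \sum_(i < n.+1) _.
move: s => s h1 h2.
nia.
Qed.
Lemma cop n : (1 <= n) -> coprime (n ^ 2 - n + 1) (2 * n).
Proof.
case: n => // p _.
have -> : (p.+1 ^ 2 - p.+1 + 1 = (p * p.+1).+1)%N by rewrite expnS expn1; nia.
rewrite coprimeMr coprimen2 /= oddM /= andbN /= coprime_sym.
by rewrite /coprime -(addn1 (p * p.+1)) gcdnMDl gcdn1.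
Qed.

Lemma natinj n i1 j1 k1 i2 j2 k2 : (3 <= n) -> j1 <= n ^ 2 - n -> j2 <= n ^ 2 - n ->
  i1 * (n ^ 2 - n + 1) + j1 + k2 * ((n ^ 2 - n + 1) * n.+1) =
  i2 * (n ^ 2 - n + 1) + j2 + k1 * ((n ^ 2 - n + 1) * n.+1) ->
  (i1 * (n ^ 2 - n + 1) + j1) * (n - 1) + (j1 * n.+1) * (n * (n - 1)) =
  (i2 * (n ^ 2 - n + 1) + j2) * (n - 1) + (j2 * n.+1) * (n * (n - 1)) ->
  [/\ i1 = i2, j1 = j2 & k1 = k2].
Proof.
move=> n3 hj1 hj2 H1 H2.
have hc := cop n (ltnW (ltnW n3)).
have e2 : (n ^ 2 = n * n)%N by rewrite expnS expn1.
have em : (n ^ 2 - n + 1 + 2 * n = n * n.+1 + 1)%N by rewrite e2; nia.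
move/eqP: H2; rewrite !(mulnA _ n) -!mulnDl eqn_pmul2r; last lia.
move/eqP => G.
have mpos : (n ^ 2 - n < n ^ 2 - n + 1)%N by lia.
move: hc hj1 hj2 H1 G em mpos; move: (n ^ 2 - n + 1)%N => m hc hj1 hj2 H1 G em mpos.
have G' : (m * (i1 + j1) + 2 * n * j1 = m * (i2 + j2) + 2 * n * j2)%N.
  have : (j1 * n.+1 * n = j1 * (n * n.+1))%N by rewrite -mulnA (mulnC n.+1).
  have : (j2 * n.+1 * n = j2 * (n * n.+1))%N by rewrite -mulnA (mulnC n.+1).
  nia.
have key : forall a b c d, (c < d)%N -> (d <= n ^ 2 - n)%N ->
    (m * (a + c) + 2 * n * c = m * (b + d) + 2 * n * d)%N -> False.
  move=> a b c d cd dn E.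
  have : (2 * n * (d - c) = m * ((a + c) - (b + d)))%N.
    rewrite !mulnBr; move: E; move: (2 * n)%N => t.
    have : (t * c <= t * d)%N by rewrite leq_mul2l ltnW ?orbT.
    move: (t * c)%N (t * d)%N => u v; lia.
  move=> E2.
  have : (m %| (d - c))%N.
    rewrite -(Gauss_dvdr _ hc) E2; exact: dvdn_mulr.
  move/dvdn_leq; lia.
have jj : j1 = j2.
  case: (ltngtP j1 j2) => // c.
  - by case: (key _ _ _ _ c hj2 G').
  - by case: (key _ _ _ _ c hj1 (esym G')).
subst j2.
have ii : i1 = i2.
  apply/eqP; rewrite -(eqn_pmul2l (_ : 0 < m)%N); last lia.
  apply/eqP; move: G'; move: (2 * n * j1)%N => t; rewrite !mulnDr; lia.
subst i2; split=> //.
apply/eqP; rewrite -(eqn_pmul2r (_ : 0 < m * n.+1)%N); last by rewrite muln_gt0; lia.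
apply/eqP; lia.
Qed.
Local Open Scope ring_scope.
Definition hp (F : fieldType) (n : nat) : {poly F} :=
  \sum_(i < n.+1) ((-1) ^+ i.+1)%:P * 'X^(i * (n - 1)).
Definition Ap (F : fieldType) (n : nat) : {poly F} := 'X^(n - 1) + 1%:P.

Lemma hp0 (F : fieldType) n : (2 <= n)%N -> (hp F n).[0] = -1.
Proof.
move=> n2; rewrite /hp horner_sum big_ord_recl /= hornerCM hornerXn mul0n expr0 mulr1 expr1.
rewrite big1 ?addr0 // => i _; rewrite hornerCM hornerXn expr0n /=.
have -> : (bump 0 i * (n - 1) == 0)%N = false by apply/eqP; rewrite /bump /=; nia.
by rewrite mulr0.
Qed.

Lemma size_hp (F : fieldType) n : (2 <= n)%N -> size (hp F n) = (n * (n - 1)).+1.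
Proof.
move=> n2.
have c0 : ((-1) ^+ n.+1 : F) != 0 by rewrite expf_neq0 // oppr_eq0 oner_eq0.
have sz : (size (\sum_(i < n) ((-1) ^+ i.+1)%:P * 'X^(i * (n - 1)) : {poly F})%R < (n * (n - 1)).+1)%N.
  apply: (leq_ltn_trans (size_sum _ _ _)).
  have : (\max_(i < n) size ((((-1) ^+ i.+1)%:P * 'X^(i * (n - 1)))%R : {poly F}) <= ((n-1) * (n-1)).+1)%N.
    apply/bigmax_leqP => i _.
    apply: (leq_trans (size_polyMleq _ _)); rewrite size_polyXn.
    have := size_polyC_leq1 ((-1) ^+ i.+1 : F); have := ltn_ord i.
    move=> h1 h2; move: h1 h2; set s := size _; move: s => s h1 h2; have : (i * (n-1) <= (n-1)*(n-1))%N by apply: leq_mul; lia.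
    move: (i * (n-1))%N ((n-1)*(n-1))%N => a b; lia.
  move=> h; apply: (leq_ltn_trans h).
  have : ((n-1) * (n-1) < n * (n-1))%N by rewrite ltn_mul2r; lia.
  move: ((n-1) * (n-1))%N (n * (n-1))%N => a b; lia.
rewrite /hp big_ord_recr /= addrC size_polyDl size_Cmul ?size_polyXn //.
Qed.

Lemma Ap0 (F : fieldType) n : (2 <= n)%N -> (Ap F n).[0] = 1.
Proof.
move=> n2; rewrite /Ap hornerD hornerXn hornerC expr0n.
have -> : (n - 1 == 0)%N = false by apply/eqP; lia.
by rewrite add0r.
Qed.

Lemma size_Ap (F : fieldType) n : (2 <= n)%N -> size (Ap F n) = n.
Proof. move=> n2; rewrite /Ap size_XnaddC; lia. Qed.

Lemma Xpart (F : fieldType) e1 e2 (R1 R2 : {poly F}) :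
  R1.[0] != 0 -> R2.[0] != 0 -> 'X^e1 * R1 = 'X^e2 * R2 -> e1 = e2.
Proof.
have key : forall a b (S1 S2 : {poly F}), S1.[0] != 0 -> (a < b)%N -> 'X^a * S1 = 'X^b * S2 -> False.
  move=> a b S1 S2 hS ab E.
  have : S1 = 'X^(b - a) * S2.
    apply: (@mulfI _ ('X^a : {poly F})); first by rewrite expf_neq0 // polyX_eq0.
    by rewrite E mulrA -exprD subnKC // ltnW.
  move=> E2; move: hS; rewrite E2 hornerM hornerXn expr0n.
  have -> : (b - a == 0)%N = false by apply/eqP; lia.
  by rewrite mul0r eqxx.
move=> h1 h2 E; case: (ltngtP e1 e2) => // c.
- by case: (key _ _ _ _ h1 c E).
- by case: (key _ _ _ _ h2 c (esym E)).
Qed.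

Lemma size_mulD (F : fieldType) (p q : {poly F}) : p != 0 -> q != 0 ->
  (size (p * q)).-1 = ((size p).-1 + (size q).-1)%N.
Proof.
move=> hp hq; rewrite size_mul //.
move: hp hq; rewrite -!size_poly_gt0; move: (size p) (size q) => a b; lia.
Qed.

Lemma Qdeg (F : fieldType) n e b c : (2 <= n)%N ->
  (size ('X^e * Ap F n ^+ b * hp F n ^+ c)).-1 = (e + b * (n - 1) + c * (n * (n - 1)))%N.
Proof.
move=> n2.
have hA : Ap F n != 0 by rewrite -size_poly_gt0 size_Ap //; lia.
have hH : hp F n != 0 by rewrite -size_poly_gt0 size_hp.
rewrite size_mulD ?size_mulD ?mulf_neq0 ?expf_neq0 ?polyX_eq0 //.
by rewrite !size_exp size_polyX size_Ap // size_hp //= mul1n; lia.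
Qed.

Lemma Qeq (F : fieldType) n e1 b1 c1 e2 b2 c2 : (2 <= n)%N ->
  'X^e1 * Ap F n ^+ b1 * hp F n ^+ c1 = 'X^e2 * Ap F n ^+ b2 * hp F n ^+ c2 ->
  e1 = e2 /\ (b1 * (n - 1) + c1 * (n * (n - 1)) = b2 * (n - 1) + c2 * (n * (n - 1)))%N.
Proof.
move=> n2 E.
have nz : forall b c, (Ap F n ^+ b * hp F n ^+ c).[0] != 0.
  by move=> b c; rewrite hornerM !horner_exp Ap0 // hp0 // expr1n mul1r expf_neq0 // oppr_eq0 oner_eq0.
have ee : e1 = e2 by apply: (@Xpart _ e1 e2 _ _ (nz b1 c1) (nz b2 c2)); rewrite !mulrA.
split=> //.
have := @Qdeg F n e1 b1 c1 n2; have := @Qdeg F n e2 b2 c2 n2; rewrite E ee; lia.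
Qed.

Lemma Apeval (F L : fieldType) (f : {rmorphism F -> L}) n (x : L) :
  (map_poly f (Ap F n)).[x] = x ^+ (n - 1) + 1.
Proof.
rewrite /Ap rmorphD /= map_polyXn map_polyC hornerD hornerXn hornerC.
congr (_ + _); exact: rmorph1.
Qed.

Lemma hpeval (F L : fieldType) (f : {rmorphism F -> L}) n (x : L) :
  (map_poly f (hp F n)).[x] = gk_h n x.
Proof.
rewrite /hp rmorph_sum horner_sum /gk_h; apply: eq_bigr => i _.
rewrite rmorphM /= map_polyC map_polyXn hornerCM hornerXn; congr (_ * _). by have := rmorphXn f i.+1 (-1); rewrite rmorphN1 => <-.
Qed.

Theorem mainTheorem1 (n : nat) (F : finFieldType) (L : fieldType)
  (iota : {rmorphism F -> L}) (x y z : L) :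
  prime_power n -> (3 <= n)%N -> #|F| = (n ^ 6)%N ->
  (* x is transcendental over F *)
  (forall p : {poly F}, (map_poly iota p).[x] = 0 -> p = 0) ->
  (* the GK equations  x^n + x = y^(n+1),  z^(n^2-n+1) = y h(x) *)
  x ^+ n + x = y ^+ n.+1 ->
  z ^+ (n ^ 2 - n + 1) = y * gk_h n x ->
  {in Tidx n &, injective (gk_fun x y z (n:=n))} /\
  size (gk_T x y z n) = gk_genus n.
Proof.
move=> _ n3 _ hx Hy Hz.
have n2 : (2 <= n)%N by lia.
set m := (n ^ 2 - n + 1)%N.
set P := (m * n.+1)%N.
have x0 : x != 0.
  apply/eqP => x0; have := hx 'X; rewrite map_polyX hornerX x0 => /(_ erefl) /eqP.
  by rewrite polyX_eq0.
have evalQ : forall e b c, (map_poly iota ('X^e * Ap F n ^+ b * hp F n ^+ c)).[x]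
    = x ^+ e * (x ^+ (n - 1) + 1) ^+ b * gk_h n x ^+ c.
  move=> e b c.
  have hA : (map_poly iota (Ap F n)).[x] = x ^+ (n - 1) + 1 by exact: Apeval.
  have hH : (map_poly iota (hp F n)).[x] = gk_h n x by exact: hpeval.
  by rewrite !rmorphM !rmorphXn /= map_polyX !hornerM !horner_exp hornerX hA hH.
have pw : forall i j k, (y ^+ i * z ^+ j * x ^+ k) ^+ P
    = x ^+ (i * m + j + k * P) * (x ^+ (n - 1) + 1) ^+ (i * m + j) * gk_h n x ^+ (j * n.+1).
  move=> i j k.
  have xy : y ^+ n.+1 = x * (x ^+ (n - 1) + 1).
    by rewrite -Hy mulrDr mulr1 -exprS; congr (_ ^+ _ + _); lia.
  have hy : (y ^+ i) ^+ P = (x * (x ^+ (n - 1) + 1)) ^+ (i * m).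
    by rewrite -exprM (_ : i * P = n.+1 * (i * m))%N ?exprM ?xy // /P; lia.
  have hz : (z ^+ j) ^+ P = (x * (x ^+ (n - 1) + 1)) ^+ j * gk_h n x ^+ (j * n.+1).
    rewrite -exprM (_ : j * P = m * (j * n.+1))%N; last by rewrite /P; lia.
    rewrite exprM Hz exprMn; congr (_ * _).
    by rewrite mulnC exprM xy.
  have hx' : (x ^+ k) ^+ P = x ^+ (k * P) by rewrite -exprM.
  rewrite !exprMn hy hz hx' !exprMn !exprD.
  move: (x ^+ (i * m)) (x ^+ j) (x ^+ (k * P)) ((x ^+ (n - 1) + 1) ^+ (i * m))
     ((x ^+ (n - 1) + 1) ^+ j) (gk_h n x ^+ (j * n.+1)).
  move=> a b c d e f.
  ring.
have inj : forall t1 t2 : 'I_n.+1 * 'I_(n ^ 2 - n).+1 * 'I_(n ^ 2),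
    gk_fun x y z t1 = gk_fun x y z t2 -> t1 = t2.
  move=> [[i1 j1] k1] [[i2 j2] k2]; rewrite /gk_fun /= => E.
  have E1 : y ^+ i1 * z ^+ j1 * x ^+ k2 = y ^+ i2 * z ^+ j2 * x ^+ k1.
    have := congr1 (fun w => w * (x ^+ k1 * x ^+ k2)) E => /=.
    rewrite mulrA divfK ?expf_neq0 // (mulrC (x ^+ k1)) mulrA divfK ?expf_neq0 //.
  have := congr1 (fun w => w ^+ P) E1 => /=; rewrite !pw -!evalQ => E2.
  have E3 : (map_poly iota ('X^(i1 * m + j1 + k2 * P) * Ap F n ^+ (i1 * m + j1) * hp F n ^+ (j1 * n.+1)
      - 'X^(i2 * m + j2 + k1 * P) * Ap F n ^+ (i2 * m + j2) * hp F n ^+ (j2 * n.+1))).[x] = 0.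
    by rewrite rmorphB hornerD hornerN E2 subrr.
  move/hx/eqP: E3; rewrite subr_eq0 => /eqP /(@Qeq _ _ _ _ _ _ _ _ n2) [Ee Eb].
  have hj1 := ltn_ord j1; have hj2 := ltn_ord j2.
  have [ii jj kk] := @natinj n _ _ _ _ _ _ n3 (hj1 : (j1 <= n ^ 2 - n)%N) (hj2 : (j2 <= n ^ 2 - n)%N) Ee Eb.
  by congr (_, _, _); apply: val_inj.
split; first by move=> t1 t2 _ _; exact: inj.
rewrite /gk_T undup_id; last by rewrite map_inj_uniq ?enum_uniq //.
by rewrite size_map -cardE /gk_genus -(@cardT n n3) mulKn.
Qed.
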